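(* Let $E$ be a nonzero real Banach space and $g\colon E^*\times E^{**}\to\,]{-}\infty,\infty]$ be proper, convex and lower semicontinuous with $g(y^*,y^{**})\ge\langle y^*,y^{**}\rangle$ for all $(y^*,y^{**})\in E^*\times E^{**}$. Let $(z^*,z^{**})\in E^*\times E^{**}$ satisfy $g(z^*,z^{**})=\langle z^*,z^{**}\rangle$. Then $g^*(z^{**},\widehat{z^*})=\langle z^*,z^{**}\rangle$.
   Context: $\widehat{z^*}\in E^{***}$ is the canonical image of $z^*$. $(E^*\times E^{**})^*$ is identified with $E^{**}\times E^{***}$ via $\langle (y^*,y^{**}),(x^{**},x^{***})\rangle=\langle y^*,x^{**}\rangle+\langle y^{**},x^{***}\rangle$, and $g^*$ is the Fenchel conjugate of $g$ with respect to this pairing. *)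

(* Defs.v *)
From HB Require Import structures.
From mathcomp Require Import all_boot all_order all_algebra.
From mathcomp Require Import all_classical all_reals all_analysis.
Set Implicit Arguments. Unset Strict Implicit. Unset Printing Implicit Defensive.
Import Order.TTheory GRing.Theory Num.Theory.
Import numFieldNormedType.Exports.
Local Open Scope classical_set_scope.
Local Open Scope ring_scope.

(* Concrete encoding of the duals E', E'', E''' for a real normed space E:
   E'   = continuous linear functionals  E -> R           (subset of E -> R)
   E''  = bounded linear functionals on E'                (subset of (E->R)->R)
   E''' elements are functions ((E->R)->R) -> R; we only need the canonical
   image hat z1 of z1 in E'''. *)
Section Duals.
Variables (R : realType) (E : normedModType R).

Definition dual_space : set (E -> R) :=
  [set f | (forall (a : R) (x y : E), f (a *: x + y) = a * f x + f y)
           /\ continuous f].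

Definition dnorm (f : E -> R) : R :=
  sup [set `|f x| | x in [set x : E | `|x| <= 1]].

Definition bidual_space : set ((E -> R) -> R) :=
  [set F | (forall (a : R) (f h : E -> R), dual_space f -> dual_space h ->
              F (fun x => a * f x + h x) = a * F f + F h)
           /\ exists M : R, forall f, dual_space f -> `|F f| <= M * dnorm f].

Definition bdnorm (F : (E -> R) -> R) : R :=
  sup [set `|F f| | f in [set f | dual_space f /\ dnorm f <= 1]].

Definition hat (zs : E -> R) : ((E -> R) -> R) -> R := fun F => F zs.

Definition fconj (g : (E -> R) -> ((E -> R) -> R) -> \bar R)
  (x2 : (E -> R) -> R) (x3 : ((E -> R) -> R) -> R) : \bar R :=
  ereal_sup [set ((x2 y.1 + x3 y.2)%:E - g y.1 y.2)%E
            | y in dual_space `*` bidual_space].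

Definition g_proper (g : (E -> R) -> ((E -> R) -> R) -> \bar R) : Prop :=
  (forall y1 y2, dual_space y1 -> bidual_space y2 -> g y1 y2 != -oo%E) /\
  exists y1 y2, [/\ dual_space y1, bidual_space y2 & (g y1 y2 < +oo)%E].

Definition g_convex (g : (E -> R) -> ((E -> R) -> R) -> \bar R) : Prop :=
  forall y1 y2 y1' y2' (t : R),
    dual_space y1 -> bidual_space y2 -> dual_space y1' -> bidual_space y2' ->
    0 <= t <= 1 ->
    (g (fun x => t * y1 x + (1 - t) * y1' x)%R
       (fun f => t * y2 f + (1 - t) * y2' f)%R
     <= t%:E * g y1 y2 + (1 - t)%:E * g y1' y2')%E.

Definition g_lsc (g : (E -> R) -> ((E -> R) -> R) -> \bar R) : Prop :=
  forall y1 y2, dual_space y1 -> bidual_space y2 ->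
  forall r : R, (r%:E < g y1 y2)%E ->
  exists2 d : R, 0 < d &
    forall y1' y2', dual_space y1' -> bidual_space y2' ->
      dnorm (fun x => y1' x - y1 x) < d ->
      bdnorm (fun f => y2' f - y2 f) < d ->
      (r%:E < g y1' y2')%E.

End Duals.

(* Main.v *)
Require Import Defs.
From HB Require Import structures.
From mathcomp Require Import all_boot all_order all_algebra.
From mathcomp Require Import all_classical all_reals all_analysis.
From mathcomp Require Import ring lra.
Import Order.TTheory GRing.Theory Num.Theory.
Import numFieldNormedType.Exports.
Local Open Scope classical_set_scope.
Local Open Scope ring_scope.

Section Helpers.
Variables (R : realType) (E : normedModType R).

Lemma dual_comb (f h : E -> R) (a b : R) : dual_space f -> dual_space h ->
  dual_space (fun x => a * f x + b * h x).
Proof.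
move=> [lf cf] [lh ch]; split.
  by move=> c x y; rewrite lf lh; ring.
move=> x; apply: cvgD; apply: cvgMl_tmp; [exact: cf | exact: ch].
Qed.

Lemma dual0 : dual_space (fun _ : E => (0:R)).
Proof. split; first by move=> *; ring. by move=> x; exact: cvg_cst. Qed.

Lemma bidual_lin (F : (E -> R) -> R) (f h : E -> R) (a b : R) :
  bidual_space F -> dual_space f -> dual_space h ->
  F (fun x => a * f x + b * h x) = a * F f + b * F h.
Proof.
move=> [lF _] df dh.
have F0 : F (fun _ => 0) = 0.
  have := lF 1 _ _ dual0 dual0.
  have -> : (fun x : E => 1 * (fun _ : E => (0:R)) x + (fun _ : E => (0:R)) x)
     = (fun _ => 0) by apply: funext => x /=; rewrite mul1r addr0.
  move=> H; have : F (fun _ : E => 0) * 1 = 0 * 1 by lra.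
  by move/mulIf => ->.
have Fh : F (fun x => b * h x) = b * F h.
  have := lF b _ _ dh dual0.
  have -> : (fun x : E => b * h x + (fun _ : E => (0:R)) x) = (fun x => b * h x)
    by apply: funext => x; rewrite addr0.
  by rewrite F0 addr0.
have := lF a _ _ df (dual_comb _ _ 0 b dual0 dh).
have -> : (fun x => a * f x + (fun x => 0 * 0 + b * h x) x) = (fun x => a * f x + b * h x)
  by apply: funext => x /=; rewrite mul0r add0r.
move=> ->; congr (_ + _).
have -> : (fun x : E => 0 * 0 + b * h x) = (fun x => b * h x)
  by apply: funext => x; rewrite mul0r add0r.
exact: Fh.
Qed.

Lemma bidual_comb (F G : (E -> R) -> R) (a b : R) :
  bidual_space F -> bidual_space G -> bidual_space (fun f => a * F f + b * G f).
Proof.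
move=> BF BG; split.
  move=> c f h df dh.
  have -> : (fun x => c * f x + h x) = (fun x => c * f x + 1 * h x)
    by apply: funext => x; rewrite mul1r.
  by rewrite !bidual_lin // !mul1r; ring.
case: BF => _ [M1 HM1]; case: BG => _ [M2 HM2].
exists (`|a| * M1 + `|b| * M2) => f df.
apply: (le_trans (ler_normD _ _)); rewrite !normrM mulrDl -!mulrA.
by apply: lerD; apply: ler_wpM2l => //; [apply: HM1 | apply: HM2].
Qed.

End Helpers.

Theorem lemma7p3 (R : realType) (E : completeNormedModType R)
  (hE : exists x : E, x != 0)
  (g : (E -> R) -> ((E -> R) -> R) -> \bar R)
  (gproper : g_proper g) (gconvex : g_convex g) (glsc : g_lsc g)
  (gge : forall y1 y2, dual_space y1 -> bidual_space y2 ->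
           ((y2 y1)%:E <= g y1 y2)%E)
  (z1 : E -> R) (z2 : (E -> R) -> R)
  (hz1 : dual_space z1) (hz2 : bidual_space z2)
  (hz : g z1 z2 = (z2 z1)%:E) :
  fconj g z2 (hat z1) = (z2 z1)%:E.
Proof.
apply/eqP; rewrite eq_le; apply/andP; split; last first.
  apply: ereal_sup_ubound; exists (z1, z2); first by split.
  by rewrite /hat /= hz -EFinB; congr (_%:E); ring.
apply: ge_ereal_sup => _ [[y1 y2] [/= dy1 dy2] <-]; rewrite /hat /=.
have := gge _ _ dy1 dy2.
case Eg : (g y1 y2) => [a| |] //= Hge; last first.
  by rewrite addeNy leNye.
rewrite -EFinB lee_fin.
set c := z2 z1.
have key : forall t : R, 0 < t <= 1 ->
  t * (t * y2 y1 + (1 - t) * y2 z1) + (1 - t) * (t * z2 y1 + (1 - t) * c)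
    <= t * a + (1 - t) * c.
  move=> t /andP[t0 t1].
  have ht : 0 <= t <= 1 by rewrite ltW.
  have := gconvex _ _ _ _ t dy1 dy2 hz1 hz2 ht.
  rewrite Eg hz -!EFinM -EFinD.
  have := gge _ _ (@dual_comb R E _ _ t (1 - t) dy1 hz1) (@bidual_comb R E _ _ t (1 - t) dy2 hz2).
  move=> H1 H2; have := le_trans H1 H2; rewrite lee_fin /=.
  rewrite !bidual_lin //.
set d := z2 y1 + y2 z1 - a - c.
set K := y2 y1 - (z2 y1 + y2 z1) + c.
rewrite leNgt; apply/negP => Hlt.
have d0 : 0 < d by rewrite /d; lra.
set t := d / (d + `|K|).
have dK : 0 < d + `|K| by have := normr_ge0 K; lra.
have tdK : t * (d + `|K|) = d by rewrite /t mulfVK // gt_eqF.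
have t0 : 0 < t by rewrite /t divr_gt0.
have t1 : t <= 1 by rewrite /t ler_pdivrMr // mul1r; have := normr_ge0 K; lra.
have := key t; rewrite t0 t1 => /(_ isT) Hk.
have E2 : t * (t * y2 y1 + (1 - t) * y2 z1) + (1 - t) * (t * z2 y1 + (1 - t) * c)
   - (t * a + (1 - t) * c) = t * (t * K + d) by rewrite /K /d; ring.
have H2 : t * (t * K + d) <= 0 by lra.
have H3 : t * K + d <= 0.
  by rewrite -(pmulr_rle0 _ t0).
have hK : 0 <= K + `|K|.
  by have := lerNnormlW (lexx `|K|); lra.
have P1 : 0 <= t * (K + `|K|) by rewrite mulr_ge0 // ltW.
have P2 : 0 < t * d by rewrite mulr_gt0.
rewrite mulrDr in P1; rewrite mulrDr in tdK; have : (0:R) < 0 by lra.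
by rewrite ltxx.
Qed.
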